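(* Let $T$ be an infinite, locally finite tree (connected acyclic graph). Then $T$ has finite metric dimension if and only if the set of vertices of $T$ of degree at least three is finite.
   Context: $d$ denotes shortest-path distance. A vertex $x$ resolves $u,v$ if $d(u,x)\ne d(v,x)$; a set $S$ of vertices is a resolving set if every pair of distinct vertices is resolved by some vertex of $S$. The metric dimension $\beta(G)$ is the minimum cardinality of a resolving set if a finite one exists, and $\infty$ otherwise. *)

(* Defs.v *)
From Stdlib Require Import List Arith.
Import ListNotations.
Set Implicit Arguments.

Section Graphs.
Variable V : Type.
Variable adj : V -> V -> Prop.

Definition simple_graph : Prop :=
  (forall u v, adj u v -> adj v u) /\ (forall v, ~ adj v v).

Inductive Walk : V -> V -> nat -> Prop :=
| walk_nil : forall v, Walk v v 0
| walk_cons : forall u w v n, adj u w -> Walk w v n -> Walk u v (S n).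

Definition connected : Prop := forall u v, exists n, Walk u v n.

Fixpoint chain (l : list V) : Prop :=
  match l with
  | a :: ((b :: _) as t) => adj a b /\ chain t
  | _ => True
  end.

(* a cycle: at least 3 distinct vertices v0 ... vk, consecutive adjacent,
   and vk adjacent to v0 *)
Definition has_cycle : Prop :=
  exists (v0 : V) (l : list V),
    2 <= length l /\ NoDup (v0 :: l) /\ chain (v0 :: l) /\ adj (last l v0) v0.

Definition is_tree : Prop := simple_graph /\ connected /\ ~ has_cycle.

Definition locally_finite : Prop :=
  forall v, exists l : list V, forall w, adj v w -> In w l.

Definition infinite_type : Prop := ~ exists l : list V, forall v : V, In v l.

Definition is_dist (u v : V) (n : nat) : Prop :=
  Walk u v n /\ forall m, Walk u v m -> n <= m.

Definition resolves (x u v : V) : Prop :=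
  exists du dv, is_dist u x du /\ is_dist v x dv /\ du <> dv.

Definition resolving_set (S : list V) : Prop :=
  forall u v, u <> v -> exists x, In x S /\ resolves x u v.

Definition finite_metric_dimension : Prop := exists S : list V, resolving_set S.

Definition deg_ge3 (v : V) : Prop :=
  exists a b c, adj v a /\ adj v b /\ adj v c /\ a <> b /\ a <> c /\ b <> c.

Definition finitely_many_branch_vertices : Prop :=
  exists l : list V, forall v, deg_ge3 v -> In v l.
End Graphs.

(* Main.v *)
Require Import Defs.
From Stdlib Require Import List Arith Lia Classical ClassicalEpsilon.
Import ListNotations.

Section T.
Variable V : Type.
Variable adj : V -> V -> Prop.
Hypothesis Hsym : forall u v, adj u v -> adj v u.
Hypothesis Hirr : forall v, ~ adj v v.
Hypothesis Hconn : connected adj.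
Hypothesis Hacyc : ~ has_cycle adj.

Lemma walk_snoc : forall u v n, Walk adj u v n -> forall w, adj v w -> Walk adj u w (S n).
Proof.
  induction 1; intros.
  - econstructor; eauto. constructor.
  - econstructor; eauto.
Qed.

Lemma walk_sym : forall u v n, Walk adj u v n -> Walk adj v u n.
Proof.
  induction 1.
  - constructor.
  - eapply walk_snoc; eauto.
Qed.

Lemma least_ex : forall P : nat -> Prop, (exists n, P n) -> exists n, P n /\ forall m, P m -> n <= m.
Proof.
  intros P [n Hn].
  induction n as [n IH] using lt_wf_ind.
  destruct (classic (exists m, m < n /\ P m)) as [[m [Hm Pm]]|Hno].
  - exact (IH m Hm Pm).
  - exists n. split; auto. intros m Pm.
    destruct (le_lt_dec n m); auto. exfalso; apply Hno; eauto.
Qed.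

Lemma dist_exists : forall u v, exists n, is_dist adj u v n.
Proof.
  intros u v. destruct (least_ex (fun n => Walk adj u v n) (Hconn u v)) as [n [H1 H2]].
  exists n; split; auto.
Qed.

Definition dd (u v : V) : nat := proj1_sig (constructive_indefinite_description _ (dist_exists u v)).

Lemma dd_spec : forall u v, is_dist adj u v (dd u v).
Proof. intros. unfold dd. destruct constructive_indefinite_description; auto. Qed.

Lemma dd_walk : forall u v n, Walk adj u v n -> dd u v <= n.
Proof. intros. apply (proj2 (dd_spec u v)); auto. Qed.

Lemma dd_W : forall u v, Walk adj u v (dd u v).
Proof. intros. apply dd_spec. Qed.

Lemma is_dist_dd : forall u v n, is_dist adj u v n -> n = dd u v.
Proof.
  intros u v n [H1 H2]. pose proof (dd_walk _ _ _ H1). pose proof (H2 _ (dd_W u v)). lia.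
Qed.

Lemma dd_refl : forall u, dd u u = 0.
Proof. intros. pose proof (dd_walk u u 0 (walk_nil _ _)). lia. Qed.

Lemma dd_zero : forall u v, dd u v = 0 -> u = v.
Proof. intros. pose proof (dd_W u v). rewrite H in H0. inversion H0; auto. Qed.

Lemma dd_sym : forall u v, dd u v = dd v u.
Proof.
  intros. pose proof (dd_walk _ _ _ (walk_sym _ _ _ (dd_W u v))).
  pose proof (dd_walk _ _ _ (walk_sym _ _ _ (dd_W v u))). lia.
Qed.

Lemma dd_adj : forall x y s, adj x y -> dd x s <= S (dd y s).
Proof. intros. apply dd_walk. econstructor; eauto. apply dd_W. Qed.

Lemma dd_step : forall u s, u <> s -> exists y, adj u y /\ S (dd y s) = dd u s.
Proof.
  intros u s Hne. pose proof (dd_W u s). remember (dd u s) as n.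
  destruct H.
  - congruence.
  - exists w. split; auto. pose proof (dd_walk _ _ _ H0). pose proof (dd_adj _ _ v H). lia.
Qed.

Lemma last_cons : forall (l : list V) a d, last (a :: l) d = last l a.
Proof.
  induction l; intros; auto.
  change (last (a :: l) d = last (a :: l) a0). rewrite !IHl. auto.
Qed.

Lemma chain_concat : forall l1 l2 a, chain adj (a :: l1) -> chain adj (last l1 a :: l2) -> chain adj (a :: l1 ++ l2).
Proof.
  induction l1; intros l2 x H1 H2.
  - exact H2.
  - rewrite last_cons in H2. destruct H1 as [Ha H1]. simpl. split; [exact Ha|]. apply IHl1; auto.
Qed.

Lemma last_app2 : forall l1 l2 (a : V), last (l1 ++ l2) a = last l2 (last l1 a).
Proof.
  induction l1; intros; auto.
  change ((a :: l1) ++ l2) with (a :: (l1 ++ l2)). rewrite !last_cons. apply IHl1.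
Qed.

Lemma chain_tail : forall (a : V) l, chain adj (a :: l) -> chain adj l.
Proof. intros a l H. destruct l; simpl in *; tauto. Qed.

Lemma chain_suffix : forall P1 l, chain adj (P1 ++ l) -> chain adj l.
Proof.
  induction P1; intros; auto. simpl in H. apply IHP1. eapply chain_tail; eauto.
Qed.

Lemma shorten : forall l y, chain adj (y :: l) -> exists l', chain adj (y :: l') /\ last l' y = last l y
  /\ NoDup (y :: l') /\ incl (y :: l') (y :: l).
Proof.
  induction l as [|h t IH]; intros y Hc.
  - exists []. repeat split; auto. constructor; auto. constructor. apply incl_refl.
  - destruct Hc as [Hyh Hc].
    destruct (IH h Hc) as [l'' [C [L [N I]]]].
    rewrite last_cons.
    destruct (classic (In y (h :: l''))) as [Hin | Hnin].
    + destruct (in_split _ _ Hin) as [P1 [P2 E]].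
      exists P2. repeat split.
      * apply (chain_suffix P1). rewrite <- E. exact C.
      * rewrite <- L. rewrite <- (last_cons l'' h y). rewrite E. rewrite last_app2. rewrite last_cons. auto.
      * rewrite E in N. apply (NoDup_app_remove_l P1). exact N.
      * intros x [Hx|Hx]; [left; auto|right].
        assert (In x (h :: l'')) by (rewrite E; apply in_or_app; right; right; auto).
        apply I in H. exact H.
    + exists (h :: l''). split; [|split; [|split]].
      * split; auto.
      * rewrite last_cons. exact L.
      * constructor; auto.
      * intros x Hx. destruct Hx as [Hx|Hx]; [left; auto|right]. apply I; auto.
Qed.

Lemma path_to : forall s k w, dd w s = k -> exists l, chain adj (w :: l) /\ last l w = s /\
  Forall (fun v => dd v s <= k) (w :: l).
Proof.
  intros s k. induction k; intros w Hw.
  - apply dd_zero in Hw. subst. exists []. repeat split; auto. constructor; [rewrite dd_refl; auto|constructor].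
  - assert (w <> s) by (intro; subst; rewrite dd_refl in Hw; discriminate).
    destruct (dd_step w s H) as [y [Hy Ey]].
    destruct (IHk y ltac:(lia)) as [l [C [L F]]].
    exists (y :: l). split; [split; auto|split].
    + rewrite last_cons. auto.
    + constructor; [lia|]. eapply Forall_impl; [|exact F]. simpl; intros; lia.
Qed.

Lemma path_from : forall s k w, dd w s = k -> exists l, chain adj (s :: l) /\ last l s = w /\
  Forall (fun v => dd v s <= k) (s :: l).
Proof.
  intros s k. induction k; intros w Hw.
  - apply dd_zero in Hw. subst. exists []. repeat split; auto. constructor; [rewrite dd_refl; auto|constructor].
  - assert (w <> s) by (intro; subst; rewrite dd_refl in Hw; discriminate).
    destruct (dd_step w s H) as [y [Hy Ey]].
    destruct (IHk y ltac:(lia)) as [l [C [L F]]].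
    exists (l ++ [w]). split; [|split].
    + apply chain_concat; auto. rewrite L. simpl. auto.
    + rewrite last_app2. reflexivity.
    + change (Forall (fun v => dd v s <= S k) ((s :: l) ++ [w])).
      apply Forall_app. split.
      * eapply Forall_impl; [|exact F]. simpl; intros; lia.
      * constructor; [lia|constructor].
Qed.

Lemma ball_path : forall s n y z, dd y s <= n -> dd z s <= n -> exists l,
  chain adj (y :: l) /\ last l y = z /\ NoDup (y :: l) /\ Forall (fun v => dd v s <= n) (y :: l).
Proof.
  intros s n y z Hy Hz.
  destruct (path_to s _ y eq_refl) as [l1 [C1 [L1 F1]]].
  destruct (path_from s _ z eq_refl) as [l2 [C2 [L2 F2]]].
  assert (C : chain adj (y :: l1 ++ l2)) by (apply chain_concat; rewrite ?L1; auto).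
  destruct (shorten _ _ C) as [l' [C' [L' [N' I']]]].
  exists l'. split; [auto|split; [|split; auto]].
  - rewrite L', last_app2, L1. auto.
  - apply Forall_forall. intros x Hx. apply I' in Hx.
    change (In x ((y :: l1) ++ l2)) in Hx. apply in_app_or in Hx. destruct Hx as [Hx|Hx].
    + rewrite Forall_forall in F1. apply F1 in Hx. lia.
    + rewrite Forall_forall in F2. assert (In x (s :: l2)) by (right; auto). apply F2 in H. lia.
Qed.

Lemma not_in_ball : forall s n x l, dd x s = S n -> Forall (fun v => dd v s <= n) l -> ~ In x l.
Proof.
  intros. intro Hin. rewrite Forall_forall in H0. apply H0 in Hin. lia.
Qed.

Lemma toward_unique : forall s x y z, adj x y -> adj x z -> S (dd y s) = dd x s -> S (dd z s) = dd x s -> y = z.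
Proof.
  intros s x y z Hy Hz Ey Ez. apply NNPP. intro Hne.
  destruct (ball_path s (dd y s) y z ltac:(lia) ltac:(lia)) as [l [C [L [N F]]]].
  apply Hacyc. exists x, (y :: l). split; [|split; [|split]].
  - destruct l; simpl in *. congruence. lia.
  - constructor; auto. apply (not_in_ball s (dd y s)); [lia|exact F].
  - split; auto.
  - rewrite last_cons, L. auto.
Qed.

Lemma adj_dd_neq : forall s x y, adj x y -> dd x s <> dd y s.
Proof.
  intros s x y Hxy E.
  destruct (dd x s) as [|n] eqn:Ex.
  - apply dd_zero in Ex. symmetry in E. apply dd_zero in E. subst. eapply Hirr; eauto.
  - assert (x <> s) by (intro; subst; rewrite dd_refl in Ex; discriminate).
    assert (y <> s) by (intro; subst; rewrite dd_refl in E; discriminate).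
    destruct (dd_step x s H) as [x' [Hx' Ex']].
    destruct (dd_step y s H0) as [y' [Hy' Ey']].
    destruct (ball_path s n y' x' ltac:(lia) ltac:(lia)) as [l [C [L [N F]]]].
    apply Hacyc. exists x, (y :: y' :: l). split; [|split; [|split]].
    + simpl; lia.
    + constructor.
      * intros [Hh|Hh]. subst. eapply Hirr; eauto. revert Hh. apply (not_in_ball s n); [lia|exact F].
      * constructor; auto. apply (not_in_ball s n); [lia|exact F].
    + split; auto. split; auto.
    + rewrite last_cons, last_cons, L. auto.
Qed.

Lemma nb_cases : forall s x y, adj x y -> S (dd y s) = dd x s \/ dd y s = S (dd x s).
Proof.
  intros. pose proof (adj_dd_neq s x y H). pose proof (dd_adj x y s H). pose proof (dd_adj y x s (Hsym _ _ H)). lia.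
Qed.

Lemma away_toward : forall s t n x y, adj x y -> dd y s = S (dd x s) -> S (dd y t) = dd x t ->
  dd y t = n -> dd x s + n + 1 <= dd t s.
Proof.
  intros s t n. induction n; intros x y Hxy Es Et En.
  - apply dd_zero in En. subst. lia.
  - assert (y <> t) by (intro; subst; rewrite dd_refl in En; discriminate).
    destruct (dd_step y t H) as [z [Hz Ez]].
    assert (Hzs : dd z s = S (dd y s)).
    { destruct (nb_cases s y z Hz) as [Hc|Hc]; auto.
      assert (z = x) by (apply (toward_unique s y z x); auto; lia).
      subst. lia. }
    pose proof (IHn y z Hz Hzs Ez ltac:(lia)). lia.
Qed.

Lemma resolves_dd : forall x u v, resolves adj x u v <-> dd u x <> dd v x.
Proof.
  intros; split.
  - intros [du [dv [H1 [H2 H3]]]]. apply is_dist_dd in H1. apply is_dist_dd in H2. congruence.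
  - intros. exists (dd u x), (dd v x). repeat split; auto; apply dd_spec.
Qed.

Lemma pair_toward : forall L v a b, resolving_set adj L -> adj v a -> adj v b -> a <> b ->
  exists s, In s L /\ (S (dd a s) = dd v s \/ S (dd b s) = dd v s).
Proof.
  intros S v a b HS Ha Hb Hab. destruct (HS a b Hab) as [s [Hs R]].
  apply resolves_dd in R. exists s. split; auto.
  destruct (nb_cases s v a Ha); destruct (nb_cases s v b Hb); lia.
Qed.

Lemma two_toward : forall v p q s t, adj v p -> adj v q -> p <> q ->
  S (dd p s) = dd v s -> S (dd q t) = dd v t -> dd v s <= dd t s.
Proof.
  intros v p q s t Hp Hq Hpq Ep Eq.
  assert (Hqs : dd q s = S (dd v s)).
  { destruct (nb_cases s v q Hq) as [Hc|Hc]; auto.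
    exfalso. apply Hpq. apply (toward_unique s v p q); auto. }
  pose proof (away_toward s t _ v q Hq Hqs Eq eq_refl). lia.
Qed.

Lemma branch_near : forall L v, resolving_set adj L -> deg_ge3 adj v ->
  exists s t, In s L /\ In t L /\ dd v s <= dd t s.
Proof.
  intros L v HS [a [b [c [Ha [Hb [Hc [Hab [Hac Hbc]]]]]]]].
  destruct (pair_toward L v a b HS Ha Hb Hab) as [s1 [I1 T1]].
  destruct (pair_toward L v a c HS Ha Hc Hac) as [s2 [I2 T2]].
  destruct (pair_toward L v b c HS Hb Hc Hbc) as [s3 [I3 T3]].
  destruct T1 as [T1|T1].
  - destruct T3 as [T3|T3].
    + exists s1, s3. repeat split; auto. eapply (two_toward v a b); eauto.
    + exists s1, s3. repeat split; auto. eapply (two_toward v a c); eauto.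
  - destruct T2 as [T2|T2].
    + exists s1, s2. repeat split; auto. eapply (two_toward v b a); eauto.
    + exists s1, s2. repeat split; auto. eapply (two_toward v b c); eauto.
Qed.

Lemma mid : forall (L : list V) s0, In s0 L -> forall k u v, dd u v = k -> 1 <= k ->
  (forall s, In s L -> dd u s = dd v s) ->
  exists m a b, adj m a /\ adj m b /\ a <> b /\ forall s, In s L -> dd a s = dd b s.
Proof.
  intros L s0 Hs0 k. induction k as [k IH] using lt_wf_ind. intros u v Ek Hk HU.
  assert (Huv : u <> v) by (intro E; rewrite E, dd_refl in Ek; lia).
  destruct (dd_step u v Huv) as [u' [Hu' Eu']].
  destruct (le_lt_dec k 2) as [Hk2|Hk2].
  - destruct (Nat.eq_dec k 1) as [->|Hk1].
    + assert (u' = v) by (apply dd_zero; lia). subst.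
      exfalso. apply (adj_dd_neq s0 u v Hu'). auto.
    + assert (u' <> v) by (intro; subst; rewrite dd_refl in Eu'; lia).
      destruct (dd_step u' v H) as [z [Hz Ez]].
      assert (z = v) by (apply dd_zero; lia). subst.
      exists u', u, v. repeat split; auto.
  - assert (Hu'v : v <> u') by (intro; subst; rewrite dd_refl in Eu'; lia).
    destruct (dd_step v u' Hu'v) as [v' [Hv' Ev']].
    pose proof (dd_sym v u') as Sy1. pose proof (dd_sym u' v') as Sy2.
    assert (Hto : forall s, In s L -> S (dd u' s) = dd u s).
    { intros s Hs. destruct (nb_cases s u u' Hu') as [Hc|Hc]; auto.
      pose proof (away_toward s v _ u u' Hu' Hc Eu' eq_refl). specialize (HU s Hs). lia. }
    assert (Hto' : forall s, In s L -> S (dd v' s) = dd v s).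
    { intros s Hs. destruct (nb_cases s v v' Hv') as [Hc|Hc]; auto.
      
      pose proof (away_toward s u' _ v v' Hv' Hc Ev' eq_refl). specialize (HU s Hs).
      specialize (Hto s Hs). lia. }
    apply (IH (dd u' v') ltac:(lia) u' v' eq_refl ltac:(lia)).
    intros s Hs. specialize (Hto s Hs). specialize (Hto' s Hs). specialize (HU s Hs). lia.
Qed.

Hypothesis Hlf : locally_finite adj.

Lemma nbr_list : forall l : list V, exists l', forall w v, In w l -> adj w v -> In v l'.
Proof.
  induction l as [|a l [l' IH]].
  - exists []. intros w v [].
  - destruct (Hlf a) as [la Ha]. exists (la ++ l'). intros w v [Hw|Hw] Hwv; apply in_or_app.
    + subst; left; auto.
    + right; eauto.
Qed.

Lemma ball_list : forall s n, exists l, forall v, dd v s <= n -> In v l.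
Proof.
  intros s n. induction n as [|n [l IH]].
  - exists [s]. intros v Hv. assert (dd v s = 0) by lia. apply dd_zero in H. subst; left; auto.
  - destruct (nbr_list l) as [l' Hl']. exists (l ++ l'). intros v Hv. apply in_or_app.
    destruct (le_lt_dec (dd v s) n); [left; auto|right].
    assert (v <> s) by (intro; subst; rewrite dd_refl in l0; lia).
    destruct (dd_step v s H) as [y [Hy Ey]].
    apply (Hl' y v); auto. apply IH. lia.
Qed.

Lemma bound1 : forall (g : V -> nat) (L : list V), exists M, forall x, In x L -> g x <= M.
Proof.
  intros g L. induction L as [|a L [M IH]].
  - exists 0. intros x [].
  - exists (g a + M). intros x [Hx|Hx]; [subst; lia|]. specialize (IH x Hx). lia.
Qed.

Lemma bound2 : forall (f : V -> V -> nat) (L : list V), exists M, forall x y, In x L -> In y L -> f x y <= M.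
Proof.
  intros f L. induction L as [|a L [M IH]].
  - exists 0. intros x y [].
  - destruct (bound1 (f a) (a :: L)) as [M1 H1]. destruct (bound1 (fun y => f y a) (a :: L)) as [M2 H2].
    exists (M + M1 + M2). intros x y [Hx|Hx] Hy.
    + subst. specialize (H1 y Hy). lia.
    + destruct Hy as [Hy|Hy].
      * subst. specialize (H2 x (or_intror Hx)). simpl in H2. lia.
      * specialize (IH x y Hx Hy). lia.
Qed.

Lemma multi_ball : forall M (L : list V), exists B, forall s v, In s L -> dd v s <= M -> In v B.
Proof.
  intros M L. induction L as [|a L [B IH]].
  - exists []. intros s v [].
  - destruct (ball_list a M) as [la Ha]. exists (la ++ B). intros s v [Hs|Hs] Hv; apply in_or_app.
    + subst; left; auto.
    + right; eauto.
Qed.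

Lemma forward : finite_metric_dimension adj -> finitely_many_branch_vertices adj.
Proof.
  intros [L HL]. destruct (bound2 (fun s t => dd t s) L) as [M HM].
  destruct (multi_ball M L) as [B HB]. exists B. intros v Hv.
  destruct (branch_near L v HL Hv) as [s [t [Hs [Ht Hd]]]].
  apply (HB s v Hs). specialize (HM s t Hs Ht). simpl in HM. lia.
Qed.

Lemma backward : infinite_type V -> finitely_many_branch_vertices adj -> finite_metric_dimension adj.
Proof.
  intros Hinf [B HB].
  assert (Hx : exists x : V, True).
  { apply NNPP. intro H. apply Hinf. exists []. intro v. apply H. exists v; auto. }
  destruct Hx as [x _].
  assert (Hy : exists y : V, y <> x).
  { apply NNPP. intro H. apply Hinf. exists [x]. intro v. left. apply NNPP. intro H'.
    apply H. exists v. auto. }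
  destruct Hy as [y Hyx].
  destruct (nbr_list B) as [NB HNB].
  exists (NB ++ [x; y]). intros u v Huv.
  apply NNPP. intro Hno.
  assert (HU : forall s, In s (NB ++ [x; y]) -> dd u s = dd v s).
  { intros s Hs. apply NNPP. intro Hne. apply Hno. exists s. split; auto. apply resolves_dd; auto. }
  assert (Hk : 1 <= dd u v).
  { destruct (dd u v) eqn:E; [|lia]. apply dd_zero in E. contradiction. }
  assert (Hxin : In x (NB ++ [x; y])) by (apply in_or_app; right; left; auto).
  destruct (mid _ x Hxin _ u v eq_refl Hk HU) as [m [a [b [Ha [Hb [Hab Hs]]]]]].
  destruct (classic (deg_ge3 adj m)) as [Hd|Hd].
  - assert (In a (NB ++ [x; y])) by (apply in_or_app; left; apply (HNB m a); auto).
    specialize (Hs a H). rewrite dd_refl in Hs. symmetry in Hs. apply dd_zero in Hs. auto.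
  - assert (Hs0 : exists s, In s (NB ++ [x; y]) /\ s <> m).
    { destruct (classic (x = m)).
      - exists y. split; [apply in_or_app; right; right; left; auto|congruence].
      - exists x. split; auto. }
    destruct Hs0 as [s [Hsin Hsm]].
    destruct (dd_step m s (not_eq_sym Hsm)) as [c [Hc Ec]].
    specialize (Hs s Hsin).
    destruct (classic (c = a)) as [->|Hca].
    + destruct (nb_cases s m b Hb) as [E|E].
      * apply Hab. apply (toward_unique s m a b); auto.
      * lia.
    + destruct (classic (c = b)) as [->|Hcb].
      * destruct (nb_cases s m a Ha) as [E|E].
        -- apply Hab. apply (toward_unique s m a b); auto.
        -- lia.
      * apply Hd. exists a, b, c. repeat split; auto.
Qed.

End T.

Theorem theorem3 (V : Type) (adj : V -> V -> Prop) :
  is_tree adj -> locally_finite adj -> infinite_type V ->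
  (finite_metric_dimension adj <-> finitely_many_branch_vertices adj).
Proof.
  intros [[Hsym Hirr] [Hconn Hacyc]] Hlf Hinf. split.
  - apply forward; auto.
  - apply backward; auto.
Qed.
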